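(* Let $\mathfrak{G}=(Y,R,E)$ be a descriptive $\mathsf{MS4}$-frame and $Q=E\circ R$. Then $\mathfrak{G}\vDash\mathsf{LKur}$ if and only if there is no morphism of descriptive $\mathsf{MS4}$-frames from a closed $Q$-upset of $\mathfrak{G}$ onto $\mathfrak{K}$, where $\mathfrak{K}=(\{a,b\},R,E)$ is the (discrete) frame with $R[a]=\{a,b\}$, $R[b]=\{b\}$, $E[a]=E[b]=\{a,b\}$.
   Context: $\mathsf{MS4}$ is the smallest set of formulas in the classical bimodal language $\mathcal{L}_{\Box\forall}$ containing all classical tautologies, the $\mathsf{S4}$ axioms for $\Box$, the $\mathsf{S5}$ axioms for $\forall$, and $\Box\forall p\to\forall\Box p$, closed under modus ponens, substitution, $\Box$- and $\forall$-necessitation; $\Diamond=\neg\Box\neg$. $\mathsf{LKur}=\mathsf{MS4}+\Box\forall\Diamond\Box p\to\Diamond\forall p$. A descriptive $\mathsf{MS4}$-frame is $(Y,R,E)$ with $Y$ a Stone space, $R$ a continuous quasi-order, $E$ a continuous equivalence relation (continuous: $R[x]=\{y:xRy\}$ closed for all $x$, $R^{-1}[U]$ clopen for clopen $U$), such that $xEy$, $yRz$ imply $\exists u$ with $xRu$, $uEz$. Valuations assign clopen sets; $\Box$ via $R$, $\forall$ via $E$. $x(E\circ R)y$ iff there is $z$ with $xRz$ and $zEy$. A $Q$-upset is $U$ with $x\in U$, $xQy\Rightarrow y\in U$; a closed $Q$-upset is regarded as a descriptive $\mathsf{MS4}$-frame with the subspace topology and restricted relations. A morphism of descriptive $\mathsf{MS4}$-frames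 $f:(Y_1,R_1,E_1)\to(Y_2,R_2,E_2)$ is a continuous map with $R_2[f(x)]=f[R_1[x]]$ and $E_2[f(x)]=f[E_1[x]]$ for all $x\in Y_1$. *)

(* Defs.v *)
From HB Require Import structures.
From mathcomp Require Import all_boot all_order all_algebra.
From mathcomp Require Import all_classical all_reals all_analysis.
Set Implicit Arguments. Unset Strict Implicit. Unset Printing Implicit Defensive.
Local Open Scope classical_set_scope.

Inductive fm : Type :=
| Var : nat -> fm
| Bot : fm
| Imp : fm -> fm -> fm
| Box : fm -> fm
| All : fm -> fm.

Definition Neg (p : fm) : fm := Imp p Bot.
Definition Dia (p : fm) : fm := Neg (Box (Neg p)).
Definition Ex  (p : fm) : fm := Neg (All (Neg p)).

(* Classical tautologies: formulas true under every Boolean evaluation in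
   which variables and modalized subformulas are treated as atoms. *)
Fixpoint beval (g : fm -> bool) (p : fm) : bool :=
  match p with
  | Bot => false
  | Imp a b => implb (beval g a) (beval g b)
  | _ => g p
  end.
Definition tautology (p : fm) : Prop := forall g, beval g p = true.

Fixpoint subst (s : nat -> fm) (p : fm) : fm :=
  match p with
  | Var n => s n
  | Bot => Bot
  | Imp a b => Imp (subst s a) (subst s b)
  | Box a => Box (subst s a)
  | All a => All (subst s a)
  end.

Definition pp := Var 0.
Definition qq := Var 1.

Inductive MS4_plus (extra : fm -> Prop) : fm -> Prop :=
| ax_taut p : tautology p -> MS4_plus extra p
| ax_boxK : MS4_plus extra (Imp (Box (Imp pp qq)) (Imp (Box pp) (Box qq)))
| ax_boxT : MS4_plus extra (Imp (Box pp) pp)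
| ax_box4 : MS4_plus extra (Imp (Box pp) (Box (Box pp)))
| ax_allK : MS4_plus extra (Imp (All (Imp pp qq)) (Imp (All pp) (All qq)))
| ax_allT : MS4_plus extra (Imp (All pp) pp)
| ax_all4 : MS4_plus extra (Imp (All pp) (All (All pp)))
| ax_all5 : MS4_plus extra (Imp (Neg (All pp)) (All (Neg (All pp))))
| ax_left : MS4_plus extra (Imp (Box (All pp)) (All (Box pp)))
| ax_extra p : extra p -> MS4_plus extra p
| r_mp p q : MS4_plus extra (Imp p q) -> MS4_plus extra p -> MS4_plus extra q
| r_subst s p : MS4_plus extra p -> MS4_plus extra (subst s p)
| r_necBox p : MS4_plus extra p -> MS4_plus extra (Box p)
| r_necAll p : MS4_plus extra p -> MS4_plus extra (All p).

Definition MS4 : fm -> Prop := MS4_plus (fun _ => False).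

Definition kuroda_axiom : fm := Imp (Box (All (Dia (Box pp)))) (Dia (All pp)).
Definition LKur : fm -> Prop := MS4_plus (fun p => p = kuroda_axiom).

Definition image_rel {Y : Type} (R : Y -> Y -> Prop) (x : Y) : set Y :=
  [set y | R x y].
Definition preimage_rel {Y : Type} (R : Y -> Y -> Prop) (U : set Y) : set Y :=
  [set x | exists2 y, R x y & U y].

Definition stone_space (Y : topologicalType) : Prop :=
  [/\ compact [set: Y], hausdorff_space Y & zero_dimensional Y].

Definition continuous_rel {Y : topologicalType} (R : Y -> Y -> Prop) : Prop :=
  (forall x, closed (image_rel R x)) /\
  (forall U : set Y, clopen U -> clopen (preimage_rel R U)).

Definition quasi_order {Y : Type} (R : Y -> Y -> Prop) : Prop :=
  (forall x, R x x) /\ (forall x y z, R x y -> R y z -> R x z).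
Definition equivalence_rel {Y : Type} (E : Y -> Y -> Prop) : Prop :=
  [/\ forall x, E x x, forall x y, E x y -> E y x
    & forall x y z, E x y -> E y z -> E x z].

Definition descriptive_ms4 (Y : topologicalType) (R E : Y -> Y -> Prop) : Prop :=
  [/\ stone_space Y, quasi_order R, equivalence_rel E,
      continuous_rel R /\ continuous_rel E &
      forall x y z, E x y -> R y z -> exists2 u, R x u & E u z].

Fixpoint sem {Y : Type} (R E : Y -> Y -> Prop) (v : nat -> set Y) (p : fm)
  : set Y :=
  match p with
  | Var n => v n
  | Bot => set0
  | Imp a b => [set x | sem R E v a x -> sem R E v b x]
  | Box a => [set x | forall y, R x y -> sem R E v a y]
  | All a => [set x | forall y, E x y -> sem R E v a y]
  end.

Definition frame_valid {Y : topologicalType} (R E : Y -> Y -> Prop) (p : fm)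
  : Prop :=
  forall v : nat -> set Y, (forall n, clopen (v n)) -> forall x, sem R E v p x.

Definition frame_validates {Y : topologicalType} (R E : Y -> Y -> Prop)
  (L : fm -> Prop) : Prop := forall p, L p -> frame_valid R E p.

Definition comp_ER {Y : Type} (R E : Y -> Y -> Prop) (x y : Y) : Prop :=
  exists2 z, R x z & E z y.

Definition upset {Y : Type} (Q : Y -> Y -> Prop) (U : set Y) : Prop :=
  forall x y, U x -> Q x y -> U y.

(* Morphism of descriptive MS4-frames from the closed upset U (subspace
   topology, restricted relations) to (Y2, R2, E2). *)
Definition ms4_morphism_on {Y1 Y2 : topologicalType}
  (U : set Y1) (R1 E1 : Y1 -> Y1 -> Prop) (R2 E2 : Y2 -> Y2 -> Prop)
  (f : Y1 -> Y2) : Prop :=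
  [/\ {within U, continuous f},
      forall x, U x -> image_rel R2 (f x) = f @` (image_rel R1 x `&` U) &
      forall x, U x -> image_rel E2 (f x) = f @` (image_rel E1 x `&` U)].

(* The frame K = ({a,b}, R, E) with a := true, b := false, discrete topology
   (bool carries the discrete topology in mathcomp-analysis). *)
Definition K_R (x y : bool) : Prop := x = true \/ y = false.
  (* R[a] = {a,b}, R[b] = {b} *)
Definition K_E (x y : bool) : Prop := True.

(* Main.v *)
Require Import Defs.
From HB Require Import structures.
From mathcomp Require Import all_boot all_order all_algebra.
From mathcomp Require Import all_classical all_reals all_analysis.
Local Open Scope classical_set_scope.

Definition boxR {Y : Type} (R : Y -> Y -> Prop) (A : set Y) : set Y :=
  [set x | forall y, R x y -> A y].

Lemma box_eq {Y:Type} (R : Y -> Y -> Prop) (A : set Y) :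
  boxR R A = ~` preimage_rel R (~` A).
Proof.
apply/seteqP; split => x /=.
- by move=> H [y Rxy nA]; apply: nA; apply: H.
- move=> H y Rxy; apply: contrapT => nA; apply: H; by exists y.
Qed.

Lemma boxR_clopen (Y : topologicalType) (R : Y -> Y -> Prop) (A : set Y) :
  continuous_rel R -> clopen A -> clopen (boxR R A).
Proof.
move=> [_ cR] cA; rewrite box_eq; apply: (clopenC set0); apply: cR.
exact: (clopenC set0).
Qed.

Lemma sem_clopen (Y : topologicalType) (R E : Y -> Y -> Prop) v p :
  continuous_rel R -> continuous_rel E -> (forall n, clopen (v n)) ->
  clopen (sem R E v p).
Proof.
move=> cR cE cv; elim: p => [n||a IHa b IHb|a IHa|a IHa] /=.
- exact: cv.
- exact: clopen0.
- have -> : [set x | sem R E v a x -> sem R E v b x] =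
            ~` sem R E v a `|` sem R E v b.
    apply/seteqP; split => x /=.
    + by move=> H; case: (pselect (sem R E v a x)) => h; [right; apply: H|left].
    + by case=> [h1 h2|h1 _] //; exfalso; exact: h1 h2.
  exact: (clopenU (clopenC set0 IHa) IHb).
- exact: (boxR_clopen _ _ _ cR IHa).
- exact: (boxR_clopen _ _ _ cE IHa).
Qed.

Lemma sem_subst {Y:Type} (R E : Y -> Y -> Prop) v s p :
  sem R E v (subst s p) = sem R E (fun n => sem R E v (s n)) p.
Proof. by elim: p => [n||a IHa b IHb|a IHa|a IHa] //=; rewrite ?IHa ?IHb. Qed.

Lemma beval_sem {Y:Type} (R E : Y -> Y -> Prop) v x p :
  beval (fun q => `[< sem R E v q x >]) p = true <-> sem R E v p x.
Proof.
elim: p => [n||a IHa b IHb|a IHa|a IHa] /=; try by split => /asboolP.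
- by split.
- case ea: (beval _ a); case eb: (beval _ b) => /=.
  + by split => // _ _; apply/IHb.
  + split => // H; move: (H (proj1 IHa ea)) => /IHb; by rewrite eb.
  + by split => // _ _; apply/IHb.
  + split => // _ Ha; move: (proj2 IHa Ha); by rewrite ea.
Qed.

Lemma LKur_sound (Y : topologicalType) (R E : Y -> Y -> Prop) :
  descriptive_ms4 R E -> frame_valid R E kuroda_axiom ->
  frame_validates R E LKur.
Proof.
move=> [st [Rr Rt] [Er Es Et] [cR cE] com] kur p; elim => {p}.
- move=> p tp v cv x; apply/(beval_sem R E v x); exact: tp.
- move=> v cv x /= H1 H2 y Rxy; exact: H1 _ Rxy (H2 _ Rxy).
- move=> v cv x /= H; exact: H _ (Rr x).
- move=> v cv x /= H y Rxy z Ryz; exact: H _ (Rt _ _ _ Rxy Ryz).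
- move=> v cv x /= H1 H2 y Rxy; exact: H1 _ Rxy (H2 _ Rxy).
- move=> v cv x /= H; exact: H _ (Er x).
- move=> v cv x /= H y Rxy z Ryz; exact: H _ (Et _ _ _ Rxy Ryz).
- move=> v cv x /= H y Exy H2; apply: H => z Exz; apply: H2.
  exact: Et (Es _ _ Exy) Exz.
- move=> v cv x /= H y Exy z Ryz; have [u Rxu Euz] := com _ _ _ Exy Ryz.
  exact: H _ Rxu _ Euz.
- by move=> p ->.
- move=> p q _ Hpq _ Hp v cv x; exact: Hpq v cv x (Hp v cv x).
- move=> s p _ Hp v cv x; rewrite sem_subst; apply: Hp => n.
  exact: sem_clopen.
- move=> p _ Hp v cv x y _; exact: Hp.
- move=> p _ Hp v cv x y _; exact: Hp.
Qed.

Lemma stone_sep (Y : topologicalType) (A B : set Y) :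
  stone_space Y -> closed A -> closed B -> (forall y, A y -> ~ B y) ->
  exists V, [/\ clopen V, A `<=` V & forall y, V y -> ~ B y].
Proof.
move=> [cY hY zY] cA cB dAB; apply: contrapT => H.
pose F := filter_from [set D : set Y | clopen D /\ A `<=` D] (fun D => D `&` B).
have FF : Filter F.
  apply: filter_from_filter; first by exists setT; split => //; exact: clopenT.
  move=> i j [ci Ai] [cj Aj]; exists (i `&` j).
    by split; [exact: clopenI | move=> y Ay; split; [apply: Ai|apply: Aj]].
  by move=> y [[iy jy] By].
have PF : ProperFilter F.
  apply: filter_from_proper => D [cD AD]; apply: contrapT => nD.
  apply: H; exists D; split => // y Dy By; apply: nD; by exists y.
have FB : F B by exists setT; [split => //; exact: clopenT | move=> y []].
have cBc : compact B := subclosed_compact cB cY (@subsetT _ B).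
have [b [Bb clb]] := cBc F PF FB.
have nAb : ~ A b by move=> Ab; exact: dAB Ab Bb.
have := @zero_dimensional_cvg Y b hY zY cY.
move=> /(_ (~` A)) [].
  apply: open_nbhs_nbhs; split => //; exact: closed_openC.
move=> C [Cb cC] CA.
have FD : F (~` C `&` B).
  exists (~` C) => //; split; first exact: clopenC.
  by move=> y Ay Cy; exact: CA Cy Ay.
have nC : nbhs b C by apply: open_nbhs_nbhs; split => //; case: cC.
have [y [[nCy By] Cy]] := clb _ _ FD nC.
exact: nCy Cy.
Qed.

Theorem theorem4p19 (Y : topologicalType) (R E : Y -> Y -> Prop) :
  descriptive_ms4 R E ->
  (frame_validates R E LKur <->
   ~ (exists (U : set Y) (f : Y -> bool),
        [/\ closed U, upset (comp_ER R E) U,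
            ms4_morphism_on U R E K_R K_E f & f @` U = [set: bool]])).
Proof.
move=> dms; have [st [Rr Rt] [Er Es Et] [cR cE] com] := dms.
split.
- move=> val [U [f [cU upU [fc fR fE] fsurj]]].
  have kur := val _ (@ax_extra (fun p => p = kuroda_axiom) kuroda_axiom erefl).
  have RU : forall x y, U x -> R x y -> U y.
    by move=> x y Ux Rxy; apply: (upU x y Ux); exists y.
  have EU : forall x y, U x -> E x y -> U y.
    by move=> x y Ux Exy; apply: (upU x y Ux); exists x.
  have cpre : forall b0, closed (f @^-1` [set b0] `&` U).
    move=> b0; rewrite closed_setIS //.
    apply: preimage_closed; last exact: discrete_closed.
    by move=> y _; apply: fc.
  have [V [clV BV VA]] : exists V, [/\ clopen V, f @^-1` [set false] `&` U `<=` V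
      & forall y, V y -> ~ (f @^-1` [set true] `&` U) y].
    apply: stone_sep => //.
    by move=> y [/= fy _] [/= fy' _]; move: fy fy'; rewrite /= => ->.
  have [x Ux _] : (f @` U) true by rewrite fsurj.
  have := kur (fun _ => V) (fun _ => clV) x; rewrite /= => K; apply: K.
  + move=> y Rxy z Eyz H.
    have Uz : U z by apply: (upU x z Ux); exists y.
    have : image_rel K_R (f z) false by right.
    rewrite fR // => -[w [Rzw Uw] fw]; apply: (H w Rzw) => t Rwt.
    apply: BV; split => //; last exact: RU Rwt.
    have : (f @` (image_rel R w `&` U)) (f t) by exists t => //; split => //; exact: RU Rwt.
    by rewrite -fR // fw /K_R => -[].
  + move=> y Rxy H.
    have Uy : U y := RU _ _ Ux Rxy.
    have : image_rel K_E (f y) true by [].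
    rewrite fE // => -[z [Eyz Uz] fz]; apply: (VA z (H z Eyz)); by split.
- move=> nomorph; apply: LKur_sound => // v cv x; apply: contrapT => nk.
  apply: nomorph.
  have [H1 H2] := (not_implyP _ _).1 nk.
  move: H1 H2 => /= H1 H2.
  pose P := v 0.
  have H2' : forall y, R x y -> ~ (forall z, E y z -> P z).
    by move=> y Rxy H; apply: H2 => K; exact: K y Rxy H.
  pose Bx := boxR R P.
  have BxR : forall z w, Bx z -> R z w -> Bx w.
    by move=> z w Bz Rzw t Rwt; apply: Bz; exact: Rt Rzw Rwt.
  have DB : forall y z, R x y -> E y z -> exists2 t, R z t & Bx t.
    move=> y z Rxy Eyz; apply: contrapT => nt; apply: (H1 y Rxy z Eyz) => t Rzt Bt.
    by apply: nt; exists t.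
  have [s Rxs Bs] := DB x x (Rr x) (Er x).
  have sEB : forall y, R s y -> exists2 z, E y z & Bx z.
    move=> y Rsy; apply: contrapT => nz.
    have Ryy := Rr y.
    have nBy : ~ Bx y by move=> By; apply: nz; exists y => //; exact: Er.
    by apply: nBy; exact: BxR Bs Rsy.
  pose Psi := preimage_rel R Bx `&` preimage_rel E (~` P) `&` preimage_rel E Bx.
  pose U := boxR R (boxR E Psi).
  have Us : U s.
    move=> y Rsy w Eyw; have Rxy := Rt _ _ _ Rxs Rsy.
    split; [split|].
    + exact: DB Rxy Eyw.
    + have [u /= Eyu nPu] : exists2 u, E y u & ~ P u.
        apply: contrapT => nu; apply: (H2' y Rxy) => z Eyz.
        by apply: contrapT => nPz; apply: nu; exists z.
      by exists u => //; exact: Et (Es _ _ Eyw) Eyu.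
    + have [z Eyz Bz] := sEB y Rsy.
      by exists z => //; exact: Et (Es _ _ Eyw) Eyz.
  have upU : upset (comp_ER R E) U.
    move=> a b Ua [c Rac Ecb] y Rby w Eyw.
    have [u Rcu Euy] := com _ _ _ Ecb Rby.
    exact: Ua u (Rt _ _ _ Rac Rcu) w (Et _ _ _ Euy Eyw).
  have RU : forall a b, U a -> R a b -> U b.
    by move=> a b Ua Rab; apply: (upU a b Ua); exists b.
  have EU : forall a b, U a -> E a b -> U b.
    by move=> a b Ua Eab; apply: (upU a b Ua); exists a.
  have PsiU : forall z, U z -> Psi z.
    move=> z0 Uz0; exact (Uz0 z0 (Rr z0) z0 (Er z0)).
  have clBx : clopen Bx by apply: boxR_clopen => //; exact: cv.
  have clU : clopen U.
    apply: boxR_clopen => //; apply: boxR_clopen => //.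
    have [_ cR'] := cR; have [_ cE'] := cE.
    apply: clopenI; first apply: clopenI.
    + exact: cR'.
    + by apply: cE'; apply: (clopenC set0); exact: cv.
    + exact: cE'.
  pose f := fun z => `[< ~ Bx z >].
  have fT : forall z, ~ Bx z -> f z = true by move=> z nB; exact/asboolT.
  have fF : forall z, Bx z -> f z = false by move=> z B; apply/asboolF.
  have fE : forall z, U z -> image_rel K_E (f z) = f @` (image_rel E z `&` U).
    move=> z Uz; have [[_ [u Ezu nPu]] [u' Ezu' Bu']] := PsiU z Uz.
    apply/seteqP; split => // -[] _.
    + exists u; first by split => //; exact: EU Ezu.
      by apply: fT => Bu; apply: nPu; exact: Bu u (Rr u).
    + exists u'; first by split => //; exact: EU Ezu'.
      exact: fF.
  exists U, f; split.
  + by case: clU.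
  + exact: upU.
  + split.
    * apply: continuous_subspaceT => z W.
      move=> /nbhs_singleton Wfz.
      case: (pselect (Bx z)) => Bz.
      - apply: (@filterS _ (nbhs z) _ Bx).
          by move=> y By /=; rewrite fF // -(fF z Bz).
        by apply: open_nbhs_nbhs; split => //; case: clBx.
      - apply: (@filterS _ (nbhs z) _ (~` Bx)).
          by move=> y By /=; rewrite fT // -(fT z Bz).
        apply: open_nbhs_nbhs; split => //; case: clBx => _.
        exact: closed_openC.
    * move=> z Uz; apply/seteqP; split => b.
      - case: (pselect (Bx z)) => Bz.
        + rewrite /image_rel /K_R /= fF // => -[//|->].
          by exists z; [split => //; exact: Rr | exact: fF].
        + have [[[t Rzt Bt] _] _] := PsiU z Uz.
          move=> _; case: b.
          * by exists z; [split => //; exact: Rr | exact: fT].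
          * by exists t; [split => //; exact: RU Rzt | exact: fF].
      - move=> [w [Rzw Uw] <-]; rewrite /image_rel /K_R /=.
        case: (pselect (Bx z)) => Bz; last by left; exact: fT.
        by right; apply: fF; exact: BxR Bz Rzw.
    * exact: fE.
  + apply/seteqP; split => // b _.
    have : image_rel K_E (f s) b by [].
    by rewrite fE // => -[z [_ Uz] <-]; exists z.
Qed.
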